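(* Let $c\ge2$ and let $Y\subseteq\Sigma^c$ be a zero-set with $|Y|=4$. Then $Y$ survives one round of tornado tabulation with probability $\left(3-2/|\Sigma|\right)/|\Sigma|$.
   Context: Let $\Sigma=\{0,\dots,2^k-1\}$, identified with $k$-bit strings, $\oplus$ bitwise xor. A simple tabulation hash function $g:\Sigma^b\to\Sigma$ is $g(x_1\cdots x_b)=T_1[x_1]\oplus\cdots\oplus T_b[x_b]$ with independent fully random tables $T_i:\Sigma\to\Sigma$. Let $\tilde h_1,\tilde h_2,\dots$ be mutually independent simple tabulation functions with $\tilde h_i:\Sigma^{c+i-1}\to\Sigma$. The simple derived key (with $d$ rounds) of $x=x_1\cdots x_c$ is $\tilde h'(x)=\tilde x_1\cdots\tilde x_{c+d}$ with $\tilde x_i=x_i$ for $i\le c$ and $\tilde x_i=\tilde h_{i-c}(\tilde x_1\cdots\tilde x_{i-1})$ for $c<i\le c+d$. A set $Y$ of keys in $\Sigma^b$ is a zero-set if for every position $i$ and every character $a$, the number of $y\in Y$ with $y_i=a$ is even. A zero-set $Y\subseteq\Sigma^c$ survives $d$ rounds of tornado tabulation if $\tilde h'(Y)\subseteq\Sigma^{c+d}$ is a zero-set; ''one round'' means $d=1$. *)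

(* Defs.v *)
From mathcomp Require Import all_boot all_order all_algebra.
Set Implicit Arguments. Unset Strict Implicit. Unset Printing Implicit Defensive.

Definition Sigma (k : nat) := {ffun 'I_k -> bool}.

Definition xorS (k : nat) (a b : Sigma k) : Sigma k := [ffun i => a i (+) b i].
Definition zeroS (k : nat) : Sigma k := [ffun => false].

Definition key (k b : nat) := {ffun 'I_b -> Sigma k}.

Definition tables (k b : nat) := {ffun 'I_b -> {ffun Sigma k -> Sigma k}}.

Definition simple_tab (k b : nat) (T : tables k b) (x : key k b) : Sigma k :=
  \big[@xorS k/zeroS k]_(i < b) T i (x i).

Definition zero_set (k b : nat) (Y : {set key k b}) : bool :=
  [forall i : 'I_b, forall a : Sigma k, ~~ odd #|[set y in Y | y i == a]|].

Definition derived1 (k c : nat) (T : tables k c) (x : key k c) : key k c.+1 :=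
  [ffun i : 'I_c.+1 => match unlift ord_max i with
                       | Some j => x j
                       | None => simple_tab T x
                       end].

Definition survives1 (k c : nat) (T : tables k c) (Y : {set key k c}) : bool :=
  zero_set [set derived1 T y | y in Y].

Definition prob_survives1 (k c : nat) (Y : {set key k c}) : rat :=
  (#|[set T : tables k c | survives1 T Y]|%:R / #|{: tables k c}|%:R)%R.

(* Main.v *)
Require Import Defs.
From HB Require Import structures.
From mathcomp Require Import all_boot all_order all_algebra.
From mathcomp Require Import ring.
Set Implicit Arguments. Unset Strict Implicit. Unset Printing Implicit Defensive.
Import GRing.Theory Num.Theory.

Lemma xorSA k : associative (@xorS k).
Proof. by move=> a b c; apply/ffunP=> i; rewrite !ffunE addbA. Qed.
Lemma xorSC k : commutative (@xorS k).
Proof. by move=> a b; apply/ffunP=> i; rewrite !ffunE addbC. Qed.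
Lemma xor0S k : left_id (zeroS k) (@xorS k).
Proof. by move=> a; apply/ffunP=> i; rewrite !ffunE. Qed.
Lemma xorS0 k : right_id (zeroS k) (@xorS k).
Proof. by move=> a; apply/ffunP=> i; rewrite !ffunE addbF. Qed.
Lemma xorSS k (a : Sigma k) : xorS a a = zeroS k.
Proof. by apply/ffunP=> i; rewrite !ffunE addbb. Qed.

HB.instance Definition _ (k : nat) :=
  Monoid.isComLaw.Build (Sigma k) (zeroS k) (@xorS k) (@xorSA k) (@xorSC k) (@xor0S k).

Lemma xorS_eq0 k (a b : Sigma k) : (xorS a b == zeroS k) = (a == b).
Proof.
apply/eqP/eqP => [H|->]; last exact: xorSS.
apply/ffunP=> i; move/ffunP/(_ i): H; rewrite !ffunE.
by case: (a i); case: (b i).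
Qed.

Lemma xorS_inj k (a b c : Sigma k) : xorS a b = xorS a c -> b = c.
Proof.
move/(congr1 (xorS a)); by rewrite !xorSA xorSS !xor0S.
Qed.

Lemma xorS_perm k (a b c d : Sigma k) :
  xorS (xorS a b) (xorS c d) = xorS (xorS a c) (xorS b d).
Proof. by apply/ffunP=> i; rewrite !ffunE; case: (a i); case: (b i); case: (c i); case: (d i). Qed.

Definition txor k b (T S : tables k b) : tables k b :=
  [ffun i => [ffun x => xorS (T i x) (S i x)]].

Lemma tab_txor k b (T S : tables k b) y :
  simple_tab (txor T S) y = xorS (simple_tab T y) (simple_tab S y).
Proof. by rewrite /simple_tab -big_split /=; apply: eq_bigr => i _; rewrite !ffunE. Qed.

Lemma txorK k b (S : tables k b) : involutive (fun T => txor T S).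
Proof. by move=> T; apply/ffunP=> i; apply/ffunP=> x; rewrite !ffunE -xorSA xorSS xorS0. Qed.

Definition etab k b (i : 'I_b) (a w : Sigma k) : tables k b :=
  [ffun j => [ffun x => if (j == i) && (x == a) then w else zeroS k]].

Lemma tab_etab k b (i : 'I_b) a w y :
  simple_tab (etab i a w) y = if y i == a then w else zeroS k.
Proof.
rewrite /simple_tab (bigD1 i) //= big1 => [|j /negbTE ji]; last by rewrite !ffunE ji.
by rewrite !ffunE eqxx /= xorS0.
Qed.

Lemma cnt4 (T : finType) (A : {set T}) (P : pred T) x1 x2 x3 x4 :
  uniq [:: x1; x2; x3; x4] -> A =i [:: x1; x2; x3; x4] ->
  #|[set z in A | P z]| = P x1 + P x2 + P x3 + P x4.
Proof.
move=> U AE.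
have -> : #|[set z in A | P z]| = #|[seq z <- [:: x1; x2; x3; x4] | P z]|.
  by apply: eq_card => z; rewrite !inE mem_filter AE andbC.
by rewrite (card_uniqP _) ?filter_uniq // size_filter /= addn0 !addnA.
Qed.

Lemma pair4_bool (e12 e13 e14 e23 e24 e34 : bool) :
  (e12 -> e23 -> e13) -> (e12 -> e13 -> e23) -> (e13 -> e23 -> e12) ->
  (e12 -> e24 -> e14) -> (e12 -> e14 -> e24) -> (e14 -> e24 -> e12) ->
  (e13 -> e34 -> e14) -> (e13 -> e14 -> e34) -> (e14 -> e34 -> e13) ->
  (e23 -> e34 -> e24) -> (e23 -> e24 -> e34) -> (e24 -> e34 -> e23) ->
  ~~ odd (true + e12 + e13 + e14) -> ~~ odd (e12 + true + e23 + e24) ->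
  ~~ odd (e13 + e23 + true + e34) -> ~~ odd (e14 + e24 + e34 + true) ->
  [|| e12 && e34, e13 && e24 | e14 && e23].
Proof. by case: e12; case: e13; case: e14; case: e23; case: e24; case: e34. Qed.

Definition pair4 (T : eqType) (a1 a2 a3 a4 : T) :=
  [|| (a1 == a2) && (a3 == a4), (a1 == a3) && (a2 == a4) | (a1 == a4) && (a2 == a3)].

Lemma pair4P (T : eqType) (a1 a2 a3 a4 : T) :
  (forall a, ~~ odd ((a1 == a) + (a2 == a) + (a3 == a) + (a4 == a))) <-> pair4 a1 a2 a3 a4.
Proof.
split=> [H|].
  have h1 := H a1; have h2 := H a2; have h3 := H a3; have h4 := H a4.
  rewrite eqxx in h1; rewrite eqxx in h2; rewrite eqxx in h3; rewrite eqxx in h4.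
  rewrite !(eq_sym a2 a1) !(eq_sym a3 a1) !(eq_sym a4 a1) !(eq_sym a3 a2)
    !(eq_sym a4 a2) !(eq_sym a4 a3) in h1 h2 h3 h4.
  rewrite /pair4; apply: (pair4_bool _ _ _ _ _ _ _ _ _ _ _ _ h1 h2 h3 h4);
    by move=> /eqP-> /eqP->; rewrite ?eqxx // eq_sym.
by case/or3P => /andP[/eqP-> /eqP->] a; case: (_ == a); case: (_ == a).
Qed.

Lemma pair4_xor k (a1 a2 a3 a4 : Sigma k) :
  pair4 a1 a2 a3 a4 -> xorS (xorS (xorS a1 a2) a3) a4 = zeroS k.
Proof.
case/or3P => /andP[/eqP-> /eqP->]; apply/ffunP=> i; rewrite !ffunE;
  by case: (a2 i); case: (a4 i); case: (a3 i).
Qed.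

Lemma derived1_inj k c (T : tables k c) : injective (derived1 T).
Proof.
move=> x y /ffunP H; apply/ffunP => j; move: (H (lift ord_max j)); by rewrite !ffunE liftK.
Qed.

Lemma neq_ex k c (x y : key k c) : x != y -> exists i, x i != y i.
Proof.
move=> xy; apply/existsP; apply: contraR xy => /existsPn H.
by apply/eqP/ffunP => i; apply/eqP; move: (H i); rewrite negbK.
Qed.

Lemma pair4_map (T1 T2 : eqType) (f : T1 -> T2) a1 a2 a3 a4 :
  pair4 a1 a2 a3 a4 -> pair4 (f a1) (f a2) (f a3) (f a4).
Proof. by case/or3P => /andP[/eqP-> /eqP->]; rewrite /pair4 !eqxx ?orbT. Qed.

Lemma xorS_eqK k (a b c : Sigma k) : (xorS a b == xorS a c) = (b == c).
Proof. by apply/eqP/eqP => [/xorS_inj|->]. Qed.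

Lemma pair4_xor3 k (a1 a2 a3 : Sigma k) :
  pair4 a1 a2 a3 (xorS (xorS a1 a2) a3) = [|| a1 == a2, a1 == a3 | a2 == a3].
Proof.
apply/idP/idP.
  by case/or3P => /andP[e1 e2]; [rewrite e1 | rewrite e1 orbT | rewrite e2 !orbT].
case/or3P => /eqP e; rewrite /pair4 -e.
- by rewrite xorSS xor0S !eqxx.
- by rewrite -xorSA (xorSC a2 a1) xorSA xorSS xor0S !eqxx orbT.
- by rewrite -xorSA xorSS xorS0 !eqxx !orbT.
Qed.

Lemma surv_iff k c (Y : {set key k c}) y1 y2 y3 y4 T :
  enum Y = [:: y1; y2; y3; y4] -> zero_set Y ->
  survives1 T Y = pair4 (simple_tab T y1) (simple_tab T y2) (simple_tab T y3) (simple_tab T y4).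
Proof.
move=> E zY.
have U : uniq [:: y1; y2; y3; y4] by rewrite -E enum_uniq.
have YE : Y =i [:: y1; y2; y3; y4] by move=> y; rewrite -E mem_enum.
set f := derived1 T.
have Uf : uniq [:: f y1; f y2; f y3; f y4].
  by rewrite -[[:: f y1; _; _; _]]/(map f [:: y1; y2; y3; y4]) (map_inj_uniq (@derived1_inj k c T)).
have fE : f @: Y =i [:: f y1; f y2; f y3; f y4].
  move=> z; rewrite -[[:: f y1; _; _; _]]/(map f [:: y1; y2; y3; y4]).
  by apply/imsetP/mapP => -[y yY ->]; exists y; rewrite ?YE // -YE.
rewrite /survives1 /zero_set; apply/idP/idP => [H|H].
  apply/pair4P => a; move/forallP/(_ ord_max)/forallP/(_ a): H.
  by rewrite (cnt4 (fun z : key k c.+1 => z ord_max == a) Uf fE) /f !ffunE unlift_none.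
move/pair4P: H => H; apply/forallP => i; apply/forallP => a.
rewrite (cnt4 (fun z : key k c.+1 => z i == a) Uf fE) /f !ffunE.
case: unliftP => [j _|_]; last exact: H.
move/forallP/(_ j)/forallP/(_ a): zY.
by rewrite (cnt4 (fun y : key k c => y j == a) U YE).
Qed.

Theorem lemma8p1 (k c : nat) (Y : {set key k c}) :
  2 <= c -> zero_set Y -> #|Y| = 4 ->
  prob_survives1 Y =
    ((3 - 2 / (#|{: Sigma k}|%:R : rat)) / #|{: Sigma k}|%:R)%R.
Proof.
move=> c2 zY cY.
have [y1 [y2 [y3 [y4 E]]]] : exists y1 y2 y3 y4, enum Y = [:: y1; y2; y3; y4].
  move: (cardE Y); rewrite cY; case: (enum Y) => [|a [|b [|d [|e [|? ?]]]]] //= _.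
  by exists a, b, d, e.
have U : uniq [:: y1; y2; y3; y4] by rewrite -E enum_uniq.
have YE : Y =i [:: y1; y2; y3; y4] by move=> y; rewrite -E mem_enum.
have par i : pair4 (y1 i) (y2 i) (y3 i) (y4 i).
  apply/pair4P => a; move/forallP/(_ i)/forallP/(_ a): zY.
  by rewrite (cnt4 (fun y : key k c => y i == a) U YE).
have xor4 T : simple_tab T y4 = xorS (xorS (simple_tab T y1) (simple_tab T y2)) (simple_tab T y3).
  have : xorS (xorS (xorS (simple_tab T y1) (simple_tab T y2)) (simple_tab T y3)) (simple_tab T y4) = zeroS k.
    rewrite /simple_tab -!big_split /=; apply: big1 => i _.
    exact: pair4_xor (pair4_map (T i) (par i)).
  by move/eqP; rewrite xorS_eq0 => /eqP ->.
pose phi T := (xorS (simple_tab T y1) (simple_tab T y2), xorS (simple_tab T y1) (simple_tab T y3)).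
pose G := [set p : Sigma k * Sigma k | [|| p.1 == zeroS k, p.2 == zeroS k | p.1 == p.2]].
have good T : survives1 T Y = (phi T \in G).
  by rewrite (surv_iff T E zY) xor4 inE /= !xorS_eq0 xorS_eqK pair4_xor3.
have achX a b c' d : (exists T, phi T = (a, b)) -> (exists T, phi T = (c', d)) ->
    exists T, phi T = (xorS a c', xorS b d).
  move=> [T1 e1] [T2 e2]; exists (txor T1 T2); move: e1 e2.
  by rewrite /phi !tab_txor => -[<- <-] [<- <-]; congr (_, _); exact: xorS_perm.
have ach1 i w : exists T, phi T = (if y2 i == y1 i then zeroS k else w,
                                   if y3 i == y1 i then zeroS k else w).
  exists (etab i (y1 i) w); rewrite /phi !tab_etab eqxx.
  by case: (y2 i == y1 i); case: (y3 i == y1 i); rewrite ?xorSS ?xorS0.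
have n21 : y2 != y1 by move: U; rewrite /= !inE; case: (y2 =P y1) => // ->; rewrite eqxx.
have n31 : y3 != y1 by move: U; rewrite /= !inE; case: (y3 =P y1) => // ->; rewrite eqxx !orbT.
have n41 : y4 != y1 by move: U; rewrite /= !inE; case: (y4 =P y1) => // ->; rewrite eqxx !orbT.
have [i2 n2] := neq_ex n21.
have [i3 n3] := neq_ex n31.
have [i4 n4] := neq_ex n41.
have c4 : (y2 i4 == y1 i4) != (y3 i4 == y1 i4).
  have := proj2 (pair4P _ _ _ _) (par i4) (y1 i4); rewrite eqxx (negbTE n4).
  by case: (y2 i4 == y1 i4); case: (y3 i4 == y1 i4).
have A2 := ach1 i2; rewrite (negbTE n2) in A2.
have A3 := ach1 i3; rewrite (negbTE n3) in A3.
have A4 := ach1 i4.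
have key : (forall w, exists T, phi T = (w, zeroS k)) -> (forall w, exists T, phi T = (zeroS k, w)) ->
    forall p, exists T, phi T = p.
  move=> H1 H2 [u v]; have := achX _ _ _ _ (H1 u) (H2 v); by rewrite xorS0 xor0S.
have d1 : (forall w, exists T, phi T = (w, w)) -> (forall w, exists T, phi T = (w, zeroS k)) ->
    (forall w, exists T, phi T = (zeroS k, w)).
  move=> H1 H2 w; have := achX _ _ _ _ (H1 w) (H2 w); by rewrite xorSS xorS0.
have d2 : (forall w, exists T, phi T = (w, w)) -> (forall w, exists T, phi T = (zeroS k, w)) ->
    (forall w, exists T, phi T = (w, zeroS k)).
  move=> H1 H2 w; have := achX _ _ _ _ (H1 w) (H2 w); by rewrite xorSS xorS0.
have ach : forall p, exists T, phi T = p.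
  case E2: (y3 i2 == y1 i2) in A2; case E3: (y2 i3 == y1 i3) in A3.
  - exact: key.
  - exact: key (d1 A3 A2).
  - exact: key (d2 A2 A3) A3.
  move: c4 A4; case: (y2 i4 == y1 i4); case: (y3 i4 == y1 i4) => //= _ A4.
    exact: key (d2 A2 A4) A4.
  exact: key A4 (d1 A2 A4).
pose fib p := [set T : tables k c | phi T == p].
pose F := #|fib (zeroS k, zeroS k)|.
have fibF p : #|fib p| = F.
  have [S eS] := ach p.
  have -> : fib p = [set txor T S | T in fib (zeroS k, zeroS k)].
    apply/setP => T; rewrite inE; apply/eqP/imsetP => [eT|[T' T'in ->]].
      exists (txor T S); last by rewrite txorK.
      rewrite inE; apply/eqP; rewrite /phi !tab_txor xorS_perm [X in (_, X)]xorS_perm.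
      move: eT eS; rewrite /phi; case: p => u v [-> ->] [-> ->]; by rewrite !xorSS.
    rewrite /phi !tab_txor xorS_perm [X in (_, X)]xorS_perm.
    move: T'in eS; rewrite inE /phi => /eqP.
    by case: p => u v [-> ->] [-> ->]; rewrite !xor0S.
  rewrite card_imset //; exact: (can_inj (txorK S)).
have F0 : 0 < F.
  have [T0 e0] := ach (zeroS k, zeroS k); apply/card_gt0P; exists T0; by rewrite inE e0.
have N0 : 0 < #|{: Sigma k}| by apply/card_gt0P; exists (zeroS k).
have tot : #|{: tables k c}| = #|{: Sigma k * Sigma k}| * F.
  rewrite -sum1_card (partition_big phi predT) //= -sum_nat_const.
  apply: eq_big => [p|p _]; first by [].
  by rewrite sum1dep_card -(fibF p); apply: eq_card => T; rewrite !inE.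
have gd : #|[set T : tables k c | survives1 T Y]| = #|G| * F.
  rewrite -sum1_card (partition_big phi (fun p => p \in G)) => [|T]; last by rewrite inE good.
  rewrite -sum_nat_const; apply: eq_bigr => p pG.
  rewrite sum1dep_card -(fibF p); apply: eq_card => T; rewrite !inE good.
  by case: (phi T =P p) => [->|]; rewrite ?pG ?andbF.
have cG : #|G| = #|{: Sigma k}| + #|{: Sigma k}|.-1 * 2.
  rewrite -sum1_card.
  have -> : \sum_(p in G) 1 =
      \sum_(x : Sigma k) \sum_(y | [|| x == zeroS k, y == zeroS k | x == y]) 1.
    by rewrite pair_big_dep; apply: eq_bigl => -[x y]; rewrite inE.
  rewrite (bigD1 (zeroS k)) //= eqxx sum1dep_card.
  have -> : #|[set y : Sigma k | true]| = #|{: Sigma k}| by apply: eq_card => y; rewrite inE.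
  congr (_ + _).
  rewrite -(cardC1 (zeroS k)) -sum_nat_const; apply: eq_bigr => x /negbTE x0.
  rewrite x0 /= sum1dep_card.
  have -> : [set y | (y == zeroS k) || (x == y)] = [set zeroS k; x].
    by apply/setP => y; rewrite !inE (eq_sym x).
  by rewrite cards2 eq_sym x0.
rewrite /prob_survives1 gd tot cG.
rewrite (_ : #|{: Sigma k * Sigma k}| = #|{: Sigma k}| * #|{: Sigma k}|); last exact: card_prod.
move: N0 F0; generalize #|{: Sigma k}| F; case=> // n; case=> // f _ _.
rewrite -[n.+1]addn1 -[f.+1]addn1 !natrM !natrD /= addn1 /=.
field.
by rewrite natr1 natr1 !pnatr_eq0.
Qed.
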